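(* Let $G\cong(\mathbb{C}^* )^N$ be an algebraic torus, $V,W$ finite-dimensional rational representations of $G$ with Hermitian norms, $v\in V\setminus\{0\}$, $w\in W\setminus\{0\}$, and $p_{w,v}(\sigma)=\log\frac{\|\sigma w\|^2}{\|w\|^2}-\log\frac{\|\sigma v\|^2}{\|v\|^2}$. Then there exists a sequence $\{\sigma_j\}\subset G$ with $p_{w,v}(\sigma_j)\to-\infty$ if and only if there exists an algebraic one-parameter subgroup $\lambda:\mathbb{C}^*\to G$ with $\lim_{|t|\to0}p_{w,v}(\lambda(t))=-\infty$. *)

(* Defs.v *)
From Stdlib Require Import Reals ZArith List.
Open Scope R_scope.

Record Cx := mkCx { Re : R; Im : R }.
Definition Cx0 : Cx := mkCx 0 0.
Definition Cx1 : Cx := mkCx 1 0.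
Definition Cadd (a b : Cx) : Cx := mkCx (Re a + Re b) (Im a + Im b).
Definition Cmul (a b : Cx) : Cx :=
  mkCx (Re a * Re b - Im a * Im b) (Re a * Im b + Im a * Re b).
Definition Cconj (a : Cx) : Cx := mkCx (Re a) (- Im a).
Definition Cnorm2 (a : Cx) : R := Re a * Re a + Im a * Im a.
Definition Cabs (a : Cx) : R := sqrt (Cnorm2 a).
Definition Cinv (a : Cx) : Cx := mkCx (Re a / Cnorm2 a) (- Im a / Cnorm2 a).
Fixpoint Cpow (a : Cx) (n : nat) : Cx :=
  match n with O => Cx1 | S m => Cmul a (Cpow a m) end.
Definition CpowZ (a : Cx) (k : Z) : Cx :=
  match k with
  | Z0 => Cx1
  | Zpos p => Cpow a (Pos.to_nat p)
  | Zneg p => Cinv (Cpow a (Pos.to_nat p))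
  end.
Fixpoint Csum (n : nat) (f : nat -> Cx) : Cx :=
  match n with O => Cx0 | S m => Cadd (Csum m f) (f m) end.
Fixpoint Cprod (n : nat) (f : nat -> Cx) : Cx :=
  match n with O => Cx1 | S m => Cmul (Cprod m f) (f m) end.

Definition in_torus (N : nat) (s : nat -> Cx) : Prop :=
  forall i, (i < N)%nat -> s i <> Cx0.
Definition tmul (s t : nat -> Cx) : nat -> Cx := fun i => Cmul (s i) (t i).
Definition tone : nat -> Cx := fun _ => Cx1.

(** Laurent monomial sigma^alpha and Laurent polynomials in N variables,
    i.e. regular functions on the torus *)
Definition monomial (N : nat) (s : nat -> Cx) (a : nat -> Z) : Cx :=
  Cprod N (fun i => CpowZ (s i) (a i)).
Definition laurentN := list (Cx * (nat -> Z)).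
Definition evalN (N : nat) (P : laurentN) (s : nat -> Cx) : Cx :=
  fold_right (fun ca acc => Cadd (Cmul (fst ca) (monomial N s (snd ca))) acc) Cx0 P.

(** A rational representation of G on C^n: a matrix of regular functions
    E i j (i, j < n) which is a group homomorphism G -> GL_n(C). *)
Definition rep_mat (N : nat) (E : nat -> nat -> laurentN) (s : nat -> Cx)
  (i j : nat) : Cx := evalN N (E i j) s.
Definition is_rational_rep (N n : nat) (E : nat -> nat -> laurentN) : Prop :=
  (forall s t, in_torus N s -> in_torus N t ->
     forall i j, (i < n)%nat -> (j < n)%nat ->
       rep_mat N E (tmul s t) i j =
       Csum n (fun k => Cmul (rep_mat N E s i k) (rep_mat N E t k j))) /\
  (forall i j, (i < n)%nat -> (j < n)%nat ->
       rep_mat N E tone i j = if Nat.eqb i j then Cx1 else Cx0).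
Definition act (N n : nat) (E : nat -> nat -> laurentN) (s : nat -> Cx)
  (x : nat -> Cx) : nat -> Cx :=
  fun i => Csum n (fun j => Cmul (rep_mat N E s i j) (x j)).

Definition nonzero_vec (n : nat) (x : nat -> Cx) : Prop :=
  exists i, (i < n)%nat /\ x i <> Cx0.
Definition hnorm2 (n : nat) (h : nat -> nat -> Cx) (x : nat -> Cx) : R :=
  Re (Csum n (fun i => Csum n (fun j => Cmul (Cconj (x i)) (Cmul (h i j) (x j))))).
Definition herm_form (n : nat) (h : nat -> nat -> Cx) : Prop :=
  (forall i j, (i < n)%nat -> (j < n)%nat -> h j i = Cconj (h i j)) /\
  (forall x, nonzero_vec n x -> 0 < hnorm2 n h x).

Definition pwv (N nV nW : nat) (EV : nat -> nat -> laurentN) (EW : nat -> nat -> laurentN)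
  (hV hW : nat -> nat -> Cx) (v w : nat -> Cx) (s : nat -> Cx) : R :=
  ln (hnorm2 nW hW (act N nW EW s w) / hnorm2 nW hW w)
  - ln (hnorm2 nV hV (act N nV EV s v) / hnorm2 nV hV v).

(** Algebraic one-parameter subgroups lambda : C^* -> G : each coordinate is a
    regular function on C^* (Laurent polynomial in t), nonvanishing on C^*,
    and lambda is a group homomorphism. *)
Definition laurent1 := list (Cx * Z).
Definition eval1 (P : laurent1) (t : Cx) : Cx :=
  fold_right (fun ck acc => Cadd (Cmul (fst ck) (CpowZ t (snd ck))) acc) Cx0 P.
Definition is_alg_1ps (N : nat) (L : nat -> laurent1) : Prop :=
  (forall t, t <> Cx0 -> forall i, (i < N)%nat -> eval1 (L i) t <> Cx0) /\
  (forall s t, s <> Cx0 -> t <> Cx0 -> forall i, (i < N)%nat ->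
     eval1 (L i) (Cmul s t) = Cmul (eval1 (L i) s) (eval1 (L i) t)).
Definition ops_point (L : nat -> laurent1) (t : Cx) : nat -> Cx :=
  fun i => eval1 (L i) t.

(* Main.v *)
Require Import Defs.
From Stdlib Require Import Reals ZArith List Lra Lia Psatz Classical.
Open Scope R_scope.

Definition Copp (a : Cx) : Cx := mkCx (- Re a) (- Im a).
Definition Csub (a b : Cx) : Cx := Cadd a (Copp b).

Lemma Cx_ext : forall a b, Re a = Re b -> Im a = Im b -> a = b.
Proof. intros [a1 a2] [b1 b2]; simpl; intros; subst; reflexivity. Qed.

Ltac cx := apply Cx_ext; simpl; ring.

Lemma Cring : ring_theory Cx0 Cx1 Cadd Cmul Csub Copp (@eq Cx).
Proof.
  constructor; intros; try cx.
Qed.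
Add Ring Cring : Cring.

Lemma Cnorm2_mul : forall a b, Cnorm2 (Cmul a b) = Cnorm2 a * Cnorm2 b.
Proof. intros [a1 a2] [b1 b2]; unfold Cnorm2; simpl; ring. Qed.
Lemma Cnorm2_nonneg : forall a, 0 <= Cnorm2 a.
Proof. intros [a1 a2]; unfold Cnorm2; simpl; nra. Qed.
Lemma Cnorm2_pos : forall a, a <> Cx0 -> 0 < Cnorm2 a.
Proof.
  intros [a1 a2] H; unfold Cnorm2; simpl.
  destruct (Req_dec a1 0); destruct (Req_dec a2 0); subst; try nra.
  exfalso; apply H; reflexivity.
Qed.
Lemma Cnorm2_zero : forall a, Cnorm2 a = 0 -> a = Cx0.
Proof. intros a H. destruct (classic (a = Cx0)) as [|h]; auto.
  apply Cnorm2_pos in h; lra. Qed.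
Lemma Cnorm2_add : forall a b, Cnorm2 (Cadd a b) <= 2 * Cnorm2 a + 2 * Cnorm2 b.
Proof. intros [a1 a2] [b1 b2]; unfold Cnorm2; simpl. pose proof (Rle_0_sqr (a1-b1)); pose proof (Rle_0_sqr (a2-b2)); unfold Rsqr in *; nra. Qed.
Lemma Cconj_mul_self : forall a, Cmul (Cconj a) a = mkCx (Cnorm2 a) 0.
Proof. intros [a1 a2]; apply Cx_ext; unfold Cnorm2; simpl; ring. Qed.
Lemma Cconj_mul : forall a b, Cconj (Cmul a b) = Cmul (Cconj a) (Cconj b).
Proof. intros; cx. Qed.
Lemma Cconj_add : forall a b, Cconj (Cadd a b) = Cadd (Cconj a) (Cconj b).
Proof. intros; cx. Qed.
Lemma Cconj_conj : forall a, Cconj (Cconj a) = a.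
Proof. intros; cx. Qed.
Lemma Cnorm2_conj : forall a, Cnorm2 (Cconj a) = Cnorm2 a.
Proof. intros; unfold Cnorm2; simpl; ring. Qed.
Lemma Cmul_nz : forall a b, a <> Cx0 -> b <> Cx0 -> Cmul a b <> Cx0.
Proof. intros a b Ha Hb E. apply Cnorm2_pos in Ha; apply Cnorm2_pos in Hb.
  assert (Cnorm2 (Cmul a b) = 0) by (rewrite E; unfold Cnorm2; simpl; ring).
  rewrite Cnorm2_mul in H. nra. Qed.
Lemma Cx1_nz : Cx1 <> Cx0.
Proof. intro H; injection H; lra. Qed.

Lemma Cinv_l : forall a, a <> Cx0 -> Cmul (Cinv a) a = Cx1.
Proof. intros a H. pose proof (Cnorm2_pos a H). destruct a as [a1 a2].
  unfold Cinv, Cnorm2 in *; simpl in *; apply Cx_ext; simpl; field; lra. Qed.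
Lemma Cinv_nz : forall a, a <> Cx0 -> Cinv a <> Cx0.
Proof. intros a H E. pose proof (Cinv_l a H). rewrite E in H0.
  apply Cx1_nz. rewrite <- H0. cx. Qed.
Lemma Cinv_mul : forall a b, a <> Cx0 -> b <> Cx0 -> Cinv (Cmul a b) = Cmul (Cinv a) (Cinv b).
Proof.
  intros a b Ha Hb. pose proof (Cnorm2_pos a Ha); pose proof (Cnorm2_pos b Hb).
  pose proof (Cnorm2_mul a b). destruct a as [a1 a2]; destruct b as [b1 b2].
  unfold Cinv, Cnorm2 in *; simpl in *. rewrite H1.
  apply Cx_ext; simpl; field; lra.
Qed.
Lemma Cnorm2_inv : forall a, a <> Cx0 -> Cnorm2 (Cinv a) = / Cnorm2 a.
Proof. intros a H. pose proof (Cinv_l a H). pose proof (Cnorm2_pos a H).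
  assert (Cnorm2 (Cmul (Cinv a) a) = 1) by (rewrite H0; unfold Cnorm2; simpl; ring).
  rewrite Cnorm2_mul in H2. field_simplify_eq; lra. Qed.

Lemma Cpow_nz : forall a n, a <> Cx0 -> Cpow a n <> Cx0.
Proof. induction n; simpl; intros; [apply Cx1_nz|apply Cmul_nz; auto]. Qed.
Lemma Cpow_mul : forall a b n, Cpow (Cmul a b) n = Cmul (Cpow a n) (Cpow b n).
Proof. induction n; simpl; [ring|rewrite IHn; ring]. Qed.
Lemma CpowZ_nz : forall a z, a <> Cx0 -> CpowZ a z <> Cx0.
Proof. intros a [|p|p] H; simpl; [apply Cx1_nz|apply Cpow_nz; auto|apply Cinv_nz, Cpow_nz; auto]. Qed.
Lemma CpowZ_mul : forall a b z, a <> Cx0 -> b <> Cx0 -> CpowZ (Cmul a b) z = Cmul (CpowZ a z) (CpowZ b z).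
Proof. intros a b [|p|p] Ha Hb; simpl; [ring|apply Cpow_mul|].
  rewrite Cpow_mul, Cinv_mul; auto; apply Cpow_nz; auto. Qed.
Lemma Cpow_one : forall n, Cpow Cx1 n = Cx1.
Proof. induction n; simpl; [auto|rewrite IHn; ring]. Qed.
Lemma CpowZ_one : forall z, CpowZ Cx1 z = Cx1.
Proof. intros [|p|p]; simpl; rewrite ?Cpow_one; auto. apply Cx_ext; simpl; unfold Cnorm2; simpl; field. Qed.

Lemma ln_Cnorm2_Cpow : forall a n, a <> Cx0 -> ln (Cnorm2 (Cpow a n)) = INR n * ln (Cnorm2 a).
Proof. intros a n H. pose proof (Cnorm2_pos a H).
  induction n. simpl. unfold Cnorm2; simpl. replace (1*1+0*0) with 1 by ring. rewrite ln_1; ring.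
  simpl Cpow. rewrite Cnorm2_mul, ln_mult, IHn; auto. rewrite S_INR; ring.
  apply Cnorm2_pos, Cpow_nz; auto. Qed.
Lemma ln_Cnorm2_CpowZ : forall a z, a <> Cx0 -> ln (Cnorm2 (CpowZ a z)) = IZR z * ln (Cnorm2 a).
Proof. intros a [|p|p] H; simpl.
  unfold Cnorm2; simpl. replace (1*1+0*0) with 1 by ring. rewrite ln_1; ring.
  rewrite ln_Cnorm2_Cpow; auto. rewrite <- positive_nat_Z, <- INR_IZR_INZ. auto.
  rewrite Cnorm2_inv, ln_Rinv, ln_Cnorm2_Cpow; auto. rewrite <- Pos2Z.opp_pos, opp_IZR, <- positive_nat_Z, <- INR_IZR_INZ; ring.
  apply Cnorm2_pos, Cpow_nz; auto. apply Cpow_nz; auto. Qed.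

Definition Creal (x : R) : Cx := mkCx x 0.
Lemma Cpow_real_exp : forall c n, Cpow (Creal (exp c)) n = Creal (exp (INR n * c)).
Proof. induction n. simpl. apply Cx_ext; simpl; [replace (0*c) with 0 by ring; rewrite exp_0|]; auto.
  simpl Cpow; rewrite IHn; rewrite S_INR; apply Cx_ext; simpl; [|ring].
  replace ((INR n + 1) * c) with (c + INR n * c) by ring. rewrite exp_plus; ring. Qed.
Lemma CpowZ_real_exp : forall c z, CpowZ (Creal (exp c)) z = Creal (exp (IZR z * c)).
Proof. intros c [|p|p]; simpl CpowZ.
  apply Cx_ext; simpl; [replace (0*c) with 0 by ring; rewrite exp_0|]; auto.
  rewrite Cpow_real_exp, <- positive_nat_Z, <- INR_IZR_INZ; auto.
  rewrite Cpow_real_exp. rewrite <- Pos2Z.opp_pos, opp_IZR, <- positive_nat_Z, <- INR_IZR_INZ.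
  pose proof (exp_pos (INR (Pos.to_nat p) * c)).
  apply Cx_ext; unfold Cinv, Cnorm2; simpl.
  replace (- INR (Pos.to_nat p) * c) with (- (INR (Pos.to_nat p) * c)) by ring. rewrite exp_Ropp. field. lra.
  field. lra. Qed.
Fixpoint Rsum (n : nat) (f : nat -> R) : R :=
  match n with O => 0 | S m => Rsum m f + f m end.
Definition Lsum (W : list Z) (f : Z -> Cx) : Cx :=
  fold_right (fun k acc => Cadd (f k) acc) Cx0 W.
Definition RLsum {A : Type} (f : A -> R) (l : list A) : R :=
  fold_right (fun k acc => f k + acc) 0 l.

Lemma Csum_ext : forall n f g, (forall i, (i < n)%nat -> f i = g i) -> Csum n f = Csum n g.
Proof. induction n; simpl; intros; auto. rewrite (IHn f g), H; auto. Qed.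
Lemma Csum_add : forall n f g, Csum n (fun i => Cadd (f i) (g i)) = Cadd (Csum n f) (Csum n g).
Proof. induction n; simpl; intros. ring. rewrite IHn; ring. Qed.
Lemma Csum_sub : forall n f g, Csum n (fun i => Csub (f i) (g i)) = Csub (Csum n f) (Csum n g).
Proof. induction n; simpl; intros. ring. rewrite IHn; ring. Qed.
Lemma Csum_mul_l : forall n c f, Csum n (fun i => Cmul c (f i)) = Cmul c (Csum n f).
Proof. induction n; simpl; intros. ring. rewrite IHn; ring. Qed.
Lemma Csum_mul_r : forall n c f, Csum n (fun i => Cmul (f i) c) = Cmul (Csum n f) c.
Proof. induction n; simpl; intros. ring. rewrite IHn; ring. Qed.
Lemma Csum_zero : forall n f, (forall i, (i < n)%nat -> f i = Cx0) -> Csum n f = Cx0.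
Proof. induction n; simpl; intros; auto. rewrite IHn, H; auto. ring. Qed.
Lemma Csum_swap : forall n m f, Csum n (fun i => Csum m (fun j => f i j)) = Csum m (fun j => Csum n (fun i => f i j)).
Proof. induction n; simpl; intros. symmetry; apply Csum_zero; auto.
  rewrite IHn, <- Csum_add. auto. Qed.
Lemma Csum_delta : forall n i x, (i < n)%nat ->
  Csum n (fun j => Cmul (if Nat.eqb i j then Cx1 else Cx0) (x j)) = x i.
Proof. induction n; intros; [lia|]. simpl.
  destruct (Nat.eqb_spec i n).
  - subst. rewrite Csum_zero. ring. intros. destruct (Nat.eqb_spec n i); [lia|ring].
  - rewrite IHn by lia. ring. Qed.
Lemma Re_Csum : forall n f, Re (Csum n f) = Rsum n (fun i => Re (f i)).
Proof. induction n; simpl; intros; auto. rewrite IHn; auto. Qed.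
Lemma Cconj_Csum : forall n f, Cconj (Csum n f) = Csum n (fun i => Cconj (f i)).
Proof. induction n; simpl; intros. cx. rewrite Cconj_add, IHn; auto. Qed.

Lemma Rsum_ext : forall n f g, (forall i, (i < n)%nat -> f i = g i) -> Rsum n f = Rsum n g.
Proof. induction n; simpl; intros; auto. rewrite (IHn f g), H; auto. Qed.
Lemma Rsum_le : forall n f g, (forall i, (i < n)%nat -> f i <= g i) -> Rsum n f <= Rsum n g.
Proof. induction n; simpl; intros. lra. pose proof (IHn f g ltac:(auto)). pose proof (H n ltac:(lia)). lra. Qed.
Lemma Rsum_nonneg : forall n f, (forall i, (i < n)%nat -> 0 <= f i) -> 0 <= Rsum n f.
Proof. induction n; simpl; intros. lra. pose proof (IHn f ltac:(auto)). pose proof (H n ltac:(lia)). lra. Qed.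
Lemma Rsum_ge_term : forall n f i, (forall i, (i < n)%nat -> 0 <= f i) -> (i < n)%nat -> f i <= Rsum n f.
Proof. induction n; simpl; intros. lia. destruct (Nat.eq_dec i n). subst.
  pose proof (Rsum_nonneg n f ltac:(auto)). lra.
  pose proof (IHn f i ltac:(auto) ltac:(lia)). pose proof (H n ltac:(lia)). lra. Qed.
Lemma Rsum_scal : forall n c f, Rsum n (fun i => c * f i) = c * Rsum n f.
Proof. induction n; simpl; intros. ring. rewrite IHn; ring. Qed.
Lemma Rsum_add : forall n f g, Rsum n (fun i => f i + g i) = Rsum n f + Rsum n g.
Proof. induction n; simpl; intros. ring. rewrite IHn; ring. Qed.
Lemma Rsum_zero : forall n f, (forall i, (i < n)%nat -> f i = 0) -> Rsum n f = 0.
Proof. induction n; simpl; intros; auto. rewrite IHn, H; auto. ring. Qed.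

Lemma Cnorm2_Csum : forall n f, Cnorm2 (Csum n f) <= 2 ^ n * Rsum n (fun i => Cnorm2 (f i)).
Proof. induction n; simpl; intros. unfold Cnorm2; simpl; lra.
  pose proof (Cnorm2_add (Csum n f) (f n)). pose proof (IHn f).
  pose proof (Cnorm2_nonneg (f n)). pose proof (pow_le 2 n ltac:(lra)).
  assert (1 <= 2 ^ n) by (apply pow_R1_Rle; lra). nra. Qed.

Lemma Lsum_ext : forall W f g, (forall k, In k W -> f k = g k) -> Lsum W f = Lsum W g.
Proof. induction W; simpl; intros; auto. rewrite (IHW f g), H; auto. Qed.
Lemma Lsum_add : forall W f g, Lsum W (fun i => Cadd (f i) (g i)) = Cadd (Lsum W f) (Lsum W g).
Proof. induction W; simpl; intros. ring. rewrite IHW; ring. Qed.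
Lemma Lsum_sub : forall W f g, Lsum W (fun i => Csub (f i) (g i)) = Csub (Lsum W f) (Lsum W g).
Proof. induction W; simpl; intros. ring. rewrite IHW; ring. Qed.
Lemma Lsum_mul_l : forall W c f, Lsum W (fun i => Cmul c (f i)) = Cmul c (Lsum W f).
Proof. induction W; simpl; intros. ring. rewrite IHW; ring. Qed.
Lemma Lsum_mul_r : forall W c f, Lsum W (fun i => Cmul (f i) c) = Cmul (Lsum W f) c.
Proof. induction W; simpl; intros. ring. rewrite IHW; ring. Qed.
Lemma Lsum_zero : forall W f, (forall k, In k W -> f k = Cx0) -> Lsum W f = Cx0.
Proof. induction W; simpl; intros; auto. rewrite IHW, H; auto. ring. Qed.
Lemma Lsum_delta : forall W k0 f, NoDup W -> In k0 W ->
  Lsum W (fun k => if Z.eq_dec k0 k then f k else Cx0) = f k0.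
Proof. induction W; simpl; intros. contradiction. inversion H; subst.
  destruct (Z.eq_dec k0 a).
  - subst. rewrite Lsum_zero. ring. intros. destruct (Z.eq_dec a k); subst; tauto.
  - destruct H0. congruence. rewrite IHW; auto. ring. Qed.
Lemma Csum_Lsum : forall n W f, Csum n (fun i => Lsum W (fun k => f i k)) = Lsum W (fun k => Csum n (fun i => f i k)).
Proof. induction n; simpl; intros. symmetry; apply Lsum_zero; auto.
  rewrite IHn, <- Lsum_add. auto. Qed.
Lemma Re_Lsum : forall W f, Re (Lsum W f) = RLsum (fun k => Re (f k)) W.
Proof. induction W; simpl; intros; auto. rewrite IHW; auto. Qed.
Lemma Im_Lsum : forall W f, Im (Lsum W f) = RLsum (fun k => Im (f k)) W.
Proof. induction W; simpl; intros; auto. rewrite IHW; auto. Qed.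
Lemma Cnorm2_Lsum : forall W f, Cnorm2 (Lsum W f) <= 2 ^ length W * RLsum (fun k => Cnorm2 (f k)) W.
Proof. induction W; simpl; intros. unfold Cnorm2; simpl; lra.
  pose proof (Cnorm2_add (f a) (Lsum W f)). pose proof (IHW f).
  pose proof (Cnorm2_nonneg (f a)). pose proof (pow_le 2 (length W) ltac:(lra)).
  assert (1 <= 2 ^ length W) by (apply pow_R1_Rle; lra). nra. Qed.
Lemma RLsum_le : forall {A} (l : list A) f g, (forall k, In k l -> f k <= g k) -> RLsum f l <= RLsum g l.
Proof. induction l; simpl; intros. lra. pose proof (IHl f g ltac:(auto)). pose proof (H a ltac:(auto)). lra. Qed.
Lemma RLsum_nonneg : forall {A} (l : list A) f, (forall k, In k l -> 0 <= f k) -> 0 <= RLsum f l.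
Proof. induction l; simpl; intros. lra. pose proof (IHl f ltac:(auto)). pose proof (H a ltac:(auto)). lra. Qed.
Lemma RLsum_scal : forall {A} (l : list A) c f, RLsum (fun i => c * f i) l = c * RLsum f l.
Proof. induction l; simpl; intros. ring. rewrite IHl; ring. Qed.
Lemma RLsum_map : forall {A B} (g : A -> B) (l : list A) f, RLsum f (map g l) = RLsum (fun a => f (g a)) l.
Proof. induction l; simpl; intros; auto. rewrite IHl; auto. Qed.
Lemma Cprod_ext : forall n f g, (forall i, (i < n)%nat -> f i = g i) -> Cprod n f = Cprod n g.
Proof. induction n; simpl; intros; auto. rewrite (IHn f g), H; auto. Qed.
Lemma monomial_ext : forall N s a b, (forall i, (i < N)%nat -> a i = b i) -> monomial N s a = monomial N s b.
Proof. intros. unfold monomial. apply Cprod_ext. intros; rewrite H; auto. Qed.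
Lemma monomial_mul : forall N s t a, in_torus N s -> in_torus N t ->
  monomial N (tmul s t) a = Cmul (monomial N s a) (monomial N t a).
Proof. unfold monomial, in_torus, tmul. induction N; simpl; intros. ring.
  rewrite IHN by auto. rewrite CpowZ_mul by auto. ring. Qed.
Lemma monomial_tone : forall N a, monomial N tone a = Cx1.
Proof. unfold monomial, tone. induction N; simpl; intros; auto. rewrite IHN, CpowZ_one. ring. Qed.
Lemma monomial_nz : forall N s a, in_torus N s -> monomial N s a <> Cx0.
Proof. unfold monomial, in_torus. induction N; simpl; intros. apply Cx1_nz.
  apply Cmul_nz. apply IHN; auto. apply CpowZ_nz; auto. Qed.

Definition lin (N : nat) (a : nat -> Z) (y : nat -> R) : R := Rsum N (fun i => IZR (a i) * y i).
Definition logv (s : nat -> Cx) : nat -> R := fun i => ln (Cnorm2 (s i)).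

Lemma ln_Cnorm2_monomial : forall N s a, in_torus N s ->
  ln (Cnorm2 (monomial N s a)) = lin N a (logv s).
Proof. unfold monomial, in_torus, lin, logv. induction N; simpl; intros.
  unfold Cnorm2; simpl. replace (1*1+0*0) with 1 by ring. apply ln_1.
  rewrite Cnorm2_mul, ln_mult, IHN, ln_Cnorm2_CpowZ; auto.
  apply Cnorm2_pos. fold (monomial N s a). apply monomial_nz. unfold in_torus; intros i Hi; apply H; lia.
  apply Cnorm2_pos, CpowZ_nz; auto. Qed.
Lemma Cnorm2_monomial : forall N s a, in_torus N s ->
  Cnorm2 (monomial N s a) = exp (lin N a (logv s)).
Proof. intros. rewrite <- ln_Cnorm2_monomial, exp_ln; auto. apply Cnorm2_pos, monomial_nz; auto. Qed.

Fixpoint Zsum (n : nat) (f : nat -> Z) : Z :=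
  match n with O => 0%Z | S m => (Zsum m f + f m)%Z end.
Definition enc (M : Z) (N : nat) (a : nat -> Z) : Z := Zsum N (fun i => a i * M ^ Z.of_nat i)%Z.
Definition curve (M : Z) (s : R) : nat -> Cx := fun i => Creal (exp (s * IZR (M ^ Z.of_nat i))).
Lemma curve_torus : forall M s N, in_torus N (curve M s).
Proof. unfold in_torus; intros M s N i _ E. apply (f_equal Re) in E. unfold curve, Creal in E; simpl in E.
  pose proof (exp_pos (s * IZR (M ^ Z.of_nat i))). lra. Qed.
Lemma monomial_curve : forall M s N a, monomial N (curve M s) a = Creal (exp (s * IZR (enc M N a))).
Proof. unfold monomial, enc. induction N; simpl; intros.
  apply Cx_ext; simpl; auto. replace (s*0) with 0 by ring. rewrite exp_0; auto.
  rewrite IHN. unfold curve. rewrite CpowZ_real_exp. rewrite plus_IZR, mult_IZR.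
  apply Cx_ext; simpl; [|ring]. replace (s * (IZR (Zsum N (fun i : nat => (a i * M ^ Z.of_nat i)%Z)) + IZR (a N) * IZR (M ^ Z.of_nat N)))
  with (s * IZR (Zsum N (fun i : nat => (a i * M ^ Z.of_nat i)%Z)) + IZR (a N) * (s * IZR (M ^ Z.of_nat N))) by ring.
  rewrite exp_plus; ring. Qed.
Lemma RLsum_ext : forall {A} (l : list A) f g, (forall k, In k l -> f k = g k) -> RLsum f l = RLsum g l.
Proof. induction l; simpl; intros; auto. rewrite (IHl f g), H; auto. Qed.

Lemma list_min : forall W : list Z, W <> nil -> exists m, In m W /\ forall k, In k W -> (m <= k)%Z.
Proof. induction W; intros. congruence. destruct W as [|b W'].
  exists a; simpl; split; auto. intros k [->|[]]; lia.
  destruct IHW as [m [Hm Hk]]. congruence.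
  destruct (Z.le_gt_cases a m).
  exists a; split; [left; auto|]. intros k [->|Hk']; [lia|]. specialize (Hk k Hk'); lia.
  exists m; split; [right; auto|]. intros k [->|Hk']; [lia|]. auto. Qed.

Lemma NoDup_remove_Z : forall (W : list Z) m, NoDup W -> NoDup (remove Z.eq_dec m W).
Proof. induction W; simpl; intros. constructor. inversion H; subst.
  destruct (Z.eq_dec m a). apply IHW; auto. constructor; auto.
  intro Hin. apply in_remove in Hin. tauto. Qed.

Lemma RLsum_remove : forall (W : list Z) m f, f m = 0 -> RLsum f W = RLsum f (remove Z.eq_dec m W).
Proof. induction W; simpl; intros; auto. destruct (Z.eq_dec m a).
  subst a. rewrite H, (IHW m f H); ring. simpl. rewrite (IHW m f H); auto. Qed.

Lemma RLsum_split_min : forall (W : list Z) m g, NoDup W -> In m W ->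
  RLsum g W = g m + RLsum (fun k => if Z.eq_dec k m then 0 else g k) W.
Proof. induction W; simpl; intros. contradiction. inversion H; subst.
  destruct (Z.eq_dec a m).
  - subst. rewrite (RLsum_ext W (fun k => if Z.eq_dec k m then 0 else g k) g).
    2:{ intros. destruct (Z.eq_dec k m); subst; tauto. }
    destruct (Z.eq_dec m m); [ring|congruence].
  - destruct H0. congruence. rewrite (IHW m g); auto. destruct (Z.eq_dec a m); [congruence|ring]. Qed.

Lemma bound_rest : forall (W : list Z) m d s, s <= 0 -> (forall k, In k W -> (m <= k)%Z) ->
  Rabs (RLsum (fun k => if Z.eq_dec k m then 0 else d k * exp (s * IZR (k - m))) W)
     <= RLsum (fun k => exp s * Rabs (d k)) W.
Proof.
  induction W; simpl; intros m d s Hs0 Hmin.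
  rewrite Rabs_R0; lra.
  eapply Rle_trans. apply Rabs_triang. apply Rplus_le_compat.
  destruct (Z.eq_dec a m). rewrite Rabs_R0. pose proof (Rabs_pos (d a)); pose proof (exp_pos s); nra.
  rewrite Rabs_mult, (Rabs_right (exp _)) by (apply Rle_ge, Rlt_le, exp_pos).
  assert (exp (s * IZR (a - m)) <= exp s).
  { assert (1 <= IZR (a - m)). { apply IZR_le. specialize (Hmin a (or_introl eq_refl)). lia. }
    assert (0 <= (- s) * (IZR (a - m) - 1)) by (apply Rmult_le_pos; lra).
    assert (Hsl : s * IZR (a - m) <= s) by lra.
    destruct (Rle_lt_or_eq_dec _ _ Hsl) as [Hl|He]; [apply Rlt_le, exp_increasing; auto|rewrite He; lra]. }
  pose proof (Rabs_pos (d a)). rewrite (Rmult_comm (exp s)). apply Rmult_le_compat_l; auto.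
  apply IHW; auto.
Qed.

Lemma LI_real_n : forall n (W : list Z), length W = n -> NoDup W -> forall d : Z -> R,
  (forall s, RLsum (fun k => d k * exp (s * IZR k)) W = 0) -> forall k, In k W -> d k = 0.
Proof.
  induction n as [n IH] using (well_founded_induction lt_wf).
  intros W HL HN d Hs k Hk.
  destruct (list_min W) as [m [Hm Hmin]]. intro E; subst; contradiction.
  assert (Hdm : d m = 0).
  { set (D := RLsum (fun k => Rabs (d k)) W).
    assert (HD : forall s, s <= 0 -> Rabs (d m) <= exp s * D).
    { intros s Hs0.
      assert (E : RLsum (fun k => d k * exp (s * IZR (k - m))) W = 0).
      { rewrite (RLsum_ext W _ (fun k => exp (- s * IZR m) * (d k * exp (s * IZR k)))).
        rewrite RLsum_scal, Hs; ring.
        intros k' _. rewrite minus_IZR. replace (s * (IZR k' - IZR m)) with (- s * IZR m + s * IZR k') by ring.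
        rewrite exp_plus; ring. }
      rewrite (RLsum_split_min W m) in E; auto.
      rewrite Z.sub_diag in E. simpl in E. replace (s*0) with 0 in E by ring. rewrite exp_0 in E.
      assert (Hb : Rabs (RLsum (fun k => if Z.eq_dec k m then 0 else d k * exp (s * IZR (k - m))) W)
                   <= RLsum (fun k => exp s * Rabs (d k)) W).
      { apply bound_rest; auto. }
      rewrite RLsum_scal in Hb. unfold D.
      replace (d m) with (- RLsum (fun k : Z => if Z.eq_dec k m then 0 else d k * exp (s * IZR (k - m))) W) by lra.
      rewrite Rabs_Ropp; auto. }
    destruct (Req_dec (d m) 0) as [|Hne]; auto. exfalso.
    pose proof (Rabs_pos_lt _ Hne) as Hp.
    assert (HD0 : Rabs (d m) <= D) by (pose proof (HD 0 ltac:(lra)); rewrite exp_0 in H; lra).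
    assert (0 < D) by lra.
    set (s := ln (Rabs (d m) / (2 * D))).
    assert (Hes : exp s = Rabs (d m) / (2 * D)) by (unfold s; rewrite exp_ln; auto; apply Rdiv_lt_0_compat; lra).
    assert (s <= 0). { unfold s. rewrite <- ln_1. destruct (Req_dec (Rabs (d m) / (2*D)) 1).
      rewrite H0; lra. apply Rlt_le, ln_increasing. apply Rdiv_lt_0_compat; lra.
      apply Rmult_lt_reg_r with (2*D). lra. unfold Rdiv. rewrite Rmult_assoc, Rinv_l; lra. }
    specialize (HD s H0). rewrite Hes in HD.
    assert (Rabs (d m) / (2 * D) * D = Rabs (d m) / 2) by (field; lra). lra. }
  destruct (Z.eq_dec k m). subst; auto.
  apply (IH (length (remove Z.eq_dec m W))) with (W := remove Z.eq_dec m W); auto.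
  subst. apply remove_length_lt; auto. apply NoDup_remove_Z; auto.
  intros s. rewrite <- RLsum_remove; auto. rewrite Hdm; ring.
  apply in_in_remove; auto.
Qed.

Lemma LI_cx : forall N M (W : list Z) (R : Z -> nat -> Z) (D : Z -> Cx), NoDup W ->
  (forall k, In k W -> enc M N (R k) = k) ->
  (forall s, in_torus N s -> Lsum W (fun k => Cmul (D k) (monomial N s (R k))) = Cx0) ->
  forall k, In k W -> D k = Cx0.
Proof.
  intros N M W R D HN Henc H k Hk.
  assert (forall s, Lsum W (fun k => Cmul (D k) (Creal (exp (s * IZR k)))) = Cx0).
  { intros s. rewrite <- (H (curve M s)) by apply curve_torus. apply Lsum_ext. intros k' Hk'.
    rewrite monomial_curve, Henc; auto. }
  apply Cx_ext; simpl.
  - apply (LI_real_n (length W) W eq_refl HN (fun k => Re (D k))); auto.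
    intros s. specialize (H0 s). apply (f_equal Re) in H0. rewrite Re_Lsum in H0. simpl in H0.
    rewrite <- H0. apply RLsum_ext. intros; simpl; ring.
  - apply (LI_real_n (length W) W eq_refl HN (fun k => Im (D k))); auto.
    intros s. specialize (H0 s). apply (f_equal Im) in H0. rewrite Im_Lsum in H0. simpl in H0.
    rewrite <- H0. apply RLsum_ext. intros; simpl; ring.
Qed.
Lemma Zsum_sub : forall N f g, (Zsum N f - Zsum N g)%Z = Zsum N (fun i => f i - g i)%Z.
Proof. induction N; simpl; intros; auto. rewrite <- IHN; lia. Qed.

Lemma zsum_bound : forall M N c, (1 <= M)%Z -> (forall i, (i < N)%nat -> (Z.abs (c i) <= M - 1)%Z) ->
  (Z.abs (Zsum N (fun i => c i * M ^ Z.of_nat i)) <= M ^ Z.of_nat N - 1)%Z.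
Proof. induction N; intros; cbn [Zsum]. simpl; lia.
  replace (M ^ Z.of_nat (S N))%Z with (M ^ Z.of_nat N * M)%Z by (rewrite Nat2Z.inj_succ, Z.pow_succ_r by lia; ring).
  pose proof (IHN c H ltac:(auto)). pose proof (H0 N ltac:(lia)).
  assert (0 < M ^ Z.of_nat N)%Z by (apply Z.pow_pos_nonneg; lia).
  set (P := (M ^ Z.of_nat N)%Z) in *. set (X := Zsum N _) in *.
  eapply Z.le_trans. apply Z.abs_triangle. rewrite Z.abs_mul, (Z.abs_eq P) by lia. nia. Qed.

Lemma zsum_zero : forall M N c, (1 <= M)%Z -> (forall i, (i < N)%nat -> (Z.abs (c i) <= M - 1)%Z) ->
  Zsum N (fun i => c i * M ^ Z.of_nat i)%Z = 0%Z -> forall i, (i < N)%nat -> c i = 0%Z.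
Proof. induction N; intros; cbn [Zsum] in *. lia.
  pose proof (zsum_bound M N c H ltac:(auto)).
  assert (0 < M ^ Z.of_nat N)%Z by (apply Z.pow_pos_nonneg; lia).
  set (P := (M ^ Z.of_nat N)%Z) in *. set (X := Zsum N _) in *.
  assert (c N = 0%Z).
  { assert (X = - (c N * P))%Z by lia. rewrite H5 in H3. rewrite Z.abs_opp, Z.abs_mul, (Z.abs_eq P) in H3 by lia.
    destruct (Z.eq_dec (c N) 0); auto. assert (1 <= Z.abs (c N))%Z by lia. nia. }
  destruct (Nat.eq_dec i N). subst; auto.
  apply (IHN c H); auto. unfold X in H1. rewrite H5 in H1. lia. lia. Qed.

Lemma Zsum_ext : forall N f g, (forall i, (i < N)%nat -> f i = g i) -> Zsum N f = Zsum N g.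
Proof. induction N; simpl; intros; auto. rewrite (IHN f g), H; auto. Qed.

Lemma enc_inj : forall M N a b B, (0 <= B)%Z -> M = (2 * B + 1)%Z ->
  (forall i, (i < N)%nat -> Z.abs (a i) <= B /\ Z.abs (b i) <= B)%Z ->
  enc M N a = enc M N b -> forall i, (i < N)%nat -> a i = b i.
Proof. intros. unfold enc in H2.
  assert (Zsum N (fun i => (a i - b i) * M ^ Z.of_nat i)%Z = 0%Z).
  { rewrite (Zsum_ext N _ (fun i => a i * M ^ Z.of_nat i - b i * M ^ Z.of_nat i)%Z).
    rewrite <- Zsum_sub. lia. intros; ring. }
  pose proof (zsum_zero M N (fun i => a i - b i)%Z ltac:(lia)).
  assert (a i - b i = 0)%Z. apply H5; auto. intros j Hj. specialize (H1 j Hj). lia. lia.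
Qed.
Fixpoint zmaxabs (N : nat) (a : nat -> Z) : Z :=
  match N with O => 0%Z | S m => Z.max (zmaxabs m a) (Z.abs (a m)) end.
Lemma zmaxabs_spec : forall N a i, (i < N)%nat -> (Z.abs (a i) <= zmaxabs N a)%Z.
Proof. induction N; simpl; intros. lia. destruct (Nat.eq_dec i N). subst; lia.
  pose proof (IHN a i ltac:(lia)); lia. Qed.
Lemma zmaxabs_nonneg : forall N a, (0 <= zmaxabs N a)%Z.
Proof. induction N; simpl; intros; lia. Qed.
Definition lbound (N : nat) (l : list (nat -> Z)) : Z :=
  fold_right (fun a acc => Z.max (zmaxabs N a) acc) 0%Z l.
Lemma lbound_spec : forall N l a i, In a l -> (i < N)%nat -> (Z.abs (a i) <= lbound N l)%Z.
Proof. induction l; simpl; intros. contradiction. destruct H. subst.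
  pose proof (zmaxabs_spec N a0 i H0); lia. pose proof (IHl a0 i H H0); lia. Qed.
Lemma lbound_nonneg : forall N l, (0 <= lbound N l)%Z.
Proof. induction l; simpl; intros; lia. Qed.

Definition coefk (M : Z) (N : nat) (P : laurentN) (k : Z) : Cx :=
  fold_right (fun t acc => if Z.eq_dec (enc M N (snd t)) k then Cadd (fst t) acc else acc) Cx0 P.

Lemma evalN_cons : forall N t P s, evalN N (t :: P) s = Cadd (Cmul (fst t) (monomial N s (snd t))) (evalN N P s).
Proof. reflexivity. Qed.

Lemma grouping : forall M N (P : laurentN) s W (R : Z -> nat -> Z), NoDup W ->
  (forall t, In t P -> In (enc M N (snd t)) W) ->
  (forall t, In t P -> monomial N s (snd t) = monomial N s (R (enc M N (snd t)))) ->
  evalN N P s = Lsum W (fun k => Cmul (coefk M N P k) (monomial N s (R k))).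
Proof.
  induction P as [|t P IH]; intros s W R HN Hin Hm.
  - simpl. symmetry; apply Lsum_zero; intros; simpl; ring.
  - rewrite evalN_cons.
    assert (IH' : evalN N P s = Lsum W (fun k => Cmul (coefk M N P k) (monomial N s (R k)))).
    { apply IH; auto; intros; [apply Hin|apply Hm]; simpl; auto. }
    rewrite IH'.
    rewrite (Lsum_ext W (fun k => Cmul (coefk M N (t :: P) k) (monomial N s (R k))) (fun k => Cadd (if Z.eq_dec (enc M N (snd t)) k then Cmul (fst t) (monomial N s (R k)) else Cx0)
                                      (Cmul (coefk M N P k) (monomial N s (R k))))).
    rewrite Lsum_add, Lsum_delta; [|auto|apply Hin; simpl; auto].
    rewrite (Hm t) by (simpl; auto). reflexivity.
    intros k _. simpl. destruct (Z.eq_dec (enc M N (snd t)) k); ring.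
Qed.

Definition allexps (n : nat) (E : nat -> nat -> laurentN) : list (nat -> Z) :=
  flat_map (fun i => flat_map (fun j => map snd (E i j)) (seq 0 n)) (seq 0 n).
Definition repBound (N n : nat) (E : nat -> nat -> laurentN) : Z := lbound N (allexps n E).
Definition repM (N n : nat) (E : nat -> nat -> laurentN) : Z := (2 * repBound N n E + 1)%Z.
Definition repW (N n : nat) (E : nat -> nat -> laurentN) : list Z :=
  nodup Z.eq_dec (map (enc (repM N n E) N) (allexps n E)).
Definition repR (N n : nat) (E : nat -> nat -> laurentN) (k : Z) : nat -> Z :=
  match find (fun a => Z.eqb (enc (repM N n E) N a) k) (allexps n E) with
  | Some a => a | None => fun _ => 0%Z end.
Definition repC (N n : nat) (E : nat -> nat -> laurentN) (k : Z) (i j : nat) : Cx :=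
  coefk (repM N n E) N (E i j) k.

Lemma in_allexps : forall n E i j t, (i < n)%nat -> (j < n)%nat -> In t (E i j) -> In (snd t) (allexps n E).
Proof. intros. unfold allexps. apply in_flat_map. exists i. split. apply in_seq; lia.
  apply in_flat_map. exists j. split. apply in_seq; lia. apply in_map; auto. Qed.

Lemma repR_spec : forall N n E a, In a (allexps n E) ->
  In (repR N n E (enc (repM N n E) N a)) (allexps n E) /\
  enc (repM N n E) N (repR N n E (enc (repM N n E) N a)) = enc (repM N n E) N a.
Proof. intros. unfold repR.
  destruct (find _ _) eqn:F.
  - apply find_some in F. destruct F. apply Z.eqb_eq in H1. auto.
  - exfalso. eapply find_none in F; eauto. rewrite Z.eqb_refl in F. discriminate. Qed.

Lemma repR_mono : forall N n E a s, In a (allexps n E) ->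
  monomial N s a = monomial N s (repR N n E (enc (repM N n E) N a)).
Proof. intros. destruct (repR_spec N n E a H). apply monomial_ext. intros i Hi.
  symmetry. apply (enc_inj (repM N n E) N _ _ (repBound N n E)); auto.
  apply lbound_nonneg. intros j Hj. unfold repBound. split; apply lbound_spec; auto. Qed.

Lemma repW_enc : forall N n E k, In k (repW N n E) -> enc (repM N n E) N (repR N n E k) = k.
Proof. intros. unfold repW in H. apply nodup_In, in_map_iff in H. destruct H as [a [<- Ha]].
  apply repR_spec; auto. Qed.

Lemma rep_expand : forall N n E s i j, (i < n)%nat -> (j < n)%nat ->
  rep_mat N E s i j = Lsum (repW N n E) (fun k => Cmul (repC N n E k i j) (monomial N s (repR N n E k))).
Proof. intros. unfold rep_mat, repC. apply (grouping (repM N n E) N (E i j) s (repW N n E) (repR N n E)). apply NoDup_nodup.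
  intros t0 Ht. unfold repW. apply nodup_In, in_map. apply (in_allexps n E i j t0); auto.
  intros t0 Ht. apply repR_mono. apply (in_allexps n E i j t0); auto. Qed.
Lemma Csub_eq : forall x y, Csub x y = Cx0 -> x = y.
Proof. intros. replace x with (Cadd (Csub x y) y) by ring. rewrite H; ring. Qed.

Lemma tmul_torus : forall N s t, in_torus N s -> in_torus N t -> in_torus N (tmul s t).
Proof. unfold in_torus, tmul; intros. apply Cmul_nz; auto. Qed.

Lemma rep_proj : forall N n E, is_rational_rep N n E -> forall k, In k (repW N n E) ->
  forall t, in_torus N t -> forall i j, (i < n)%nat -> (j < n)%nat ->
  Csum n (fun l => Cmul (repC N n E k i l) (rep_mat N E t l j)) = Cmul (monomial N t (repR N n E k)) (repC N n E k i j).
Proof.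
  intros N n E [Hhom Hid] k Hk t Ht i j Hi Hj.
  set (W := repW N n E). set (R := repR N n E). set (C := repC N n E).
  set (D := fun k => Csub (Cmul (C k i j) (monomial N t (R k))) (Csum n (fun l => Cmul (C k i l) (rep_mat N E t l j)))).
  assert (HD : D k = Cx0).
  { apply (LI_cx N (repM N n E) W R D). apply NoDup_nodup.
    intros; apply repW_enc; auto.
    2: auto.
    intros s Hs.
    pose proof (Hhom s t Hs Ht i j Hi Hj) as Hh.
    rewrite rep_expand with (n := n) in Hh by auto.
    rewrite (Csum_ext n _ (fun l => Lsum W (fun k => Cmul (monomial N s (R k)) (Cmul (C k i l) (rep_mat N E t l j))))) in Hh.
    2:{ intros l Hl. rewrite rep_expand with (n := n) by auto. rewrite <- Lsum_mul_r. apply Lsum_ext. intros; fold C R; ring. }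
    rewrite Csum_Lsum in Hh.
    unfold D. rewrite (Lsum_ext W _ (fun k => Csub (Cmul (C k i j) (monomial N (tmul s t) (R k)))
        (Csum n (fun l => Cmul (monomial N s (R k)) (Cmul (C k i l) (rep_mat N E t l j)))))).
    rewrite Lsum_sub. fold C R W in Hh. rewrite Hh. ring.
    intros k' _. rewrite monomial_mul by auto. rewrite Csum_mul_l. ring. }
  apply Csub_eq in HD. rewrite <- HD. fold C R. ring.
Qed.
Definition std (n : nat) (x : nat -> Cx) : R := Rsum n (fun i => Cnorm2 (x i)).
Definition Qf (n : nat) (h : nat -> nat -> Cx) (x : nat -> Cx) : Cx :=
  Csum n (fun i => Csum n (fun j => Cmul (Cconj (x i)) (Cmul (h i j) (x j)))).
Definition beta (n : nat) (h : nat -> nat -> Cx) (x : nat -> Cx) : Cx := Csum n (fun j => Cmul (h n j) (x j)).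
Definition hp (n : nat) (h : nat -> nat -> Cx) : nat -> nat -> Cx :=
  fun i j => Csub (h i j) (Cmul (Cmul (Cconj (h n i)) (h n j)) (Creal (/ Re (h n n)))).

Lemma std_nonneg : forall n x, 0 <= std n x.
Proof. intros; apply Rsum_nonneg; intros; apply Cnorm2_nonneg. Qed.
Lemma hnorm2_ext : forall n h x y, (forall i, (i < n)%nat -> x i = y i) -> hnorm2 n h x = hnorm2 n h y.
Proof. intros. unfold hnorm2. f_equal. apply Csum_ext. intros. apply Csum_ext. intros. rewrite !H; auto. Qed.

Lemma Qf_expand : forall n h x, (forall i, (i < n)%nat -> h i n = Cconj (h n i)) ->
  Qf (S n) h x = Cadd (Cadd (Qf n h x) (Cmul (Cconj (beta n h x)) (x n)))
                      (Cadd (Cmul (Cconj (x n)) (beta n h x)) (Cmul (h n n) (mkCx (Cnorm2 (x n)) 0))).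
Proof.
  intros n h x Hh. unfold Qf. cbn [Csum]. rewrite Csum_add. fold (Qf n h x).
  unfold beta. rewrite Cconj_Csum, <- Csum_mul_r, <- Csum_mul_l, <- Cconj_mul_self.
  rewrite (Csum_ext n (fun i => Cmul (Cconj (x i)) (Cmul (h i n) (x n)))
                      (fun i => Cmul (Cconj (Cmul (h n i) (x i))) (x n))).
  unfold Qf. ring.
  intros. rewrite Hh by auto. rewrite Cconj_mul. ring.
Qed.

Lemma Re_conj_mul : forall a b, Re (Cmul (Cconj a) b) = Re (Cmul (Cconj b) a).
Proof. intros [a1 a2] [b1 b2]; simpl; ring. Qed.

Lemma Qf_hp : forall n h x, 
  Qf n (hp n h) x = Csub (Qf n h x) (Cmul (Cmul (Cconj (beta n h x)) (beta n h x)) (Creal (/ Re (h n n)))).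
Proof.
  intros. unfold Qf, hp, beta.
  rewrite (Csum_ext n _ (fun i => Csub (Csum n (fun j => Cmul (Cconj (x i)) (Cmul (h i j) (x j))))
       (Cmul (Cmul (Cconj (Cmul (h n i) (x i))) (Csum n (fun j => Cmul (h n j) (x j)))) (Creal (/ Re (h n n)))))).
  rewrite Csum_sub, Csum_mul_r, Csum_mul_r, Cconj_Csum. reflexivity.
  intros i _. rewrite <- Csum_mul_l, <- Csum_mul_r, <- Csum_sub. apply Csum_ext. intros. rewrite Cconj_mul. ring.
Qed.

Lemma hnorm2_split : forall n h x, (forall i, (i < n)%nat -> h i n = Cconj (h n i)) -> 0 < Re (h n n) ->
  hnorm2 (S n) h x = hnorm2 n (hp n h) x +
     Re (h n n) * Cnorm2 (Cadd (x n) (Cmul (Creal (/ Re (h n n))) (beta n h x))).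
Proof.
  intros n h x Hh Hd. unfold hnorm2. fold (Qf (S n) h x). fold (Qf n (hp n h) x).
  rewrite Qf_expand, Qf_hp by auto.
  destruct (beta n h x) as [b1 b2]. destruct (x n) as [a1 a2]. destruct (h n n) as [d e].
  simpl in *. unfold Cnorm2, Csub, Copp, Creal; simpl. field. lra.
Qed.

Lemma hnorm2_expand0 : forall n h x, (forall i, (i < n)%nat -> h i n = Cconj (h n i)) ->
  (forall i, (i < n)%nat -> x i = Cx0) -> hnorm2 (S n) h x = Re (h n n) * Cnorm2 (x n).
Proof.
  intros n h x Hh Hx. unfold hnorm2. fold (Qf (S n) h x). rewrite Qf_expand by auto.
  assert (Qf n h x = Cx0). { unfold Qf. apply Csum_zero. intros. rewrite Hx by auto. unfold Cconj; simpl.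
    apply Csum_zero. intros. apply Cx_ext; simpl; ring. }
  assert (beta n h x = Cx0). { unfold beta. apply Csum_zero. intros. rewrite Hx by auto. ring. }
  rewrite H, H0. simpl. ring.
Qed.
Lemma Cnorm2_beta : forall n h x, Cnorm2 (beta n h x) <= 2 ^ n * (Rsum n (fun j => Cnorm2 (h n j)) * std n x).
Proof.
  intros. unfold beta. eapply Rle_trans. apply Cnorm2_Csum. apply Rmult_le_compat_l. apply pow_le; lra.
  unfold std. rewrite <- Rsum_scal. apply Rsum_le. intros. rewrite Cnorm2_mul.
  apply Rmult_le_compat_r. apply Cnorm2_nonneg. apply (Rsum_ge_term n (fun j => Cnorm2 (h n j))); auto.
  intros; apply Cnorm2_nonneg. Qed.

Lemma PD : forall n h, (forall i j, (i < n)%nat -> (j < n)%nat -> h j i = Cconj (h i j)) ->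
  (forall x, nonzero_vec n x -> 0 < hnorm2 n h x) ->
  exists c, 0 < c /\ forall x, c * std n x <= hnorm2 n h x.
Proof.
  induction n; intros h Hh Hp.
  - exists 1. split. lra. intros. unfold std, hnorm2; simpl. lra.
  - set (d := Re (h n n)).
    assert (Hhn : forall i, (i < n)%nat -> h i n = Cconj (h n i)) by (intros; apply Hh; lia).
    assert (Hd : 0 < d).
    { set (e := fun i => if Nat.eqb i n then Cx1 else Cx0).
      assert (0 < hnorm2 (S n) h e). { apply Hp. exists n. split. lia. unfold e. rewrite Nat.eqb_refl. apply Cx1_nz. }
      rewrite hnorm2_expand0 in H; auto. unfold e in H. rewrite Nat.eqb_refl in H.
      unfold Cnorm2 in H; simpl in H. fold d in H. lra.
      intros. unfold e. destruct (Nat.eqb_spec i n); [lia|auto]. }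
    destruct (IHn (hp n h)) as [c' [Hc' Hb']].
    + intros i j Hi Hj. unfold hp. rewrite (Hh i j) by lia. apply Cx_ext; simpl; ring.
    + intros x' Hx'.
      set (x := fun i => if Nat.eqb i n then Cmul (Creal (- / d)) (beta n h x') else x' i).
      assert (Hxx : forall i, (i < n)%nat -> x i = x' i).
      { intros. unfold x. destruct (Nat.eqb_spec i n); [lia|auto]. }
      assert (Hbx : beta n h x = beta n h x'). { unfold beta. apply Csum_ext. intros. rewrite Hxx; auto. }
      assert (0 < hnorm2 (S n) h x).
      { apply Hp. destruct Hx' as [i [Hi Hne]]. exists i. split. lia. rewrite Hxx; auto. }
      rewrite hnorm2_split in H by auto. rewrite (hnorm2_ext n _ x x') in H by auto.
      replace (Cadd (x n) (Cmul (Creal (/ Re (h n n))) (beta n h x))) with Cx0 in H.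
      unfold Cnorm2 in H; simpl in H. lra.
      rewrite Hbx. unfold x. rewrite Nat.eqb_refl. fold d. apply Cx_ext; simpl; ring.
    + set (H0 := Rsum n (fun j => Cnorm2 (h n j))).
      assert (HH0 : 0 <= H0) by (apply Rsum_nonneg; intros; apply Cnorm2_nonneg).
      set (A := 1 + 2 * (2 ^ n * H0) / (d * d)).
      assert (HA : 1 <= A). { unfold A. assert (0 <= 2 * (2 ^ n * H0) / (d * d)).
        unfold Rdiv. apply Rmult_le_pos. pose proof (pow_le 2 n ltac:(lra)). nra.
        left; apply Rinv_0_lt_compat; nra. lra. }
      exists (Rmin (c' / A) (d / 2)). split. apply Rmin_pos. apply Rdiv_lt_0_compat; lra. lra.
      intros x. rewrite hnorm2_split by auto. fold d.
      set (t := Cadd (x n) (Cmul (Creal (/ d)) (beta n h x))).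
      assert (Hxn : Cnorm2 (x n) <= 2 * Cnorm2 t + 2 * (Cnorm2 (beta n h x) / (d * d))).
      { replace (x n) with (Cadd t (Cmul (Creal (- / d)) (beta n h x))).
        eapply Rle_trans. apply Cnorm2_add. rewrite Cnorm2_mul.
        unfold Creal, Cnorm2 at 2; simpl. right. field. lra.
        unfold t. apply Cx_ext; simpl; ring. }
      pose proof (Cnorm2_beta n h x). fold H0 in H.
      assert (Hstd : std (S n) x <= A * std n x + 2 * Cnorm2 t).
      { unfold std at 1; cbn [Rsum]. fold (std n x). unfold A.
        assert (Cnorm2 (beta n h x) / (d * d) <= 2 ^ n * H0 * std n x / (d * d)).
        { apply Rmult_le_compat_r. left; apply Rinv_0_lt_compat; nra. lra. }
        assert (2 * (2 ^ n * H0) / (d * d) * std n x = 2 * (2 ^ n * H0 * std n x / (d * d))) by (field; lra).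
        nra. }
      pose proof (Hb' x). pose proof (std_nonneg n x). pose proof (Cnorm2_nonneg t).
      pose proof (Rmin_l (c' / A) (d / 2)). pose proof (Rmin_r (c' / A) (d / 2)).
      set (c := Rmin (c' / A) (d / 2)) in *.
      assert (c * A <= c'). { apply Rmult_le_reg_r with (/ A). apply Rinv_0_lt_compat; lra.
        replace (c * A * / A) with c by (field; lra). auto. }
      assert (0 < c) by (apply Rmin_pos; [apply Rdiv_lt_0_compat|]; lra).
      assert (c * std (S n) x <= c * (A * std n x + 2 * Cnorm2 t)) by (apply Rmult_le_compat_l; lra).
      nra.
Qed.
Lemma Re_term_bound : forall a h b, Re (Cmul (Cconj a) (Cmul h b)) <= (Rabs (Re h) + Rabs (Im h)) * (Cnorm2 a + Cnorm2 b).
Proof.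
  intros [a1 a2] [h1 h2] [b1 b2]; unfold Cnorm2; simpl.
  set (X := a1 * b1 + a2 * b2). set (Y := a2 * b1 - a1 * b2).
  replace (a1 * (h1 * b1 - h2 * b2) - - a2 * (h1 * b2 + h2 * b1)) with (h1 * X + h2 * Y) by (unfold X, Y; ring).
  set (S := a1 * a1 + a2 * a2 + (b1 * b1 + b2 * b2)).
  pose proof (Rle_0_sqr (a1 - b1)); pose proof (Rle_0_sqr (a1 + b1));
  pose proof (Rle_0_sqr (a2 - b2)); pose proof (Rle_0_sqr (a2 + b2));
  pose proof (Rle_0_sqr (a2 - b1)); pose proof (Rle_0_sqr (a2 + b1));
  pose proof (Rle_0_sqr (a1 - b2)); pose proof (Rle_0_sqr (a1 + b2)); unfold Rsqr in *.
  assert (Rabs X <= S). { unfold X, S. apply Rabs_le. split; lra. }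
  assert (Rabs Y <= S). { unfold Y, S. apply Rabs_le. split; lra. }
  assert (h1 * X <= Rabs h1 * S). { eapply Rle_trans. apply Rle_abs. rewrite Rabs_mult. apply Rmult_le_compat_l; auto. apply Rabs_pos. }
  assert (h2 * Y <= Rabs h2 * S). { eapply Rle_trans. apply Rle_abs. rewrite Rabs_mult. apply Rmult_le_compat_l; auto. apply Rabs_pos. }
  lra.
Qed.

Lemma Cnorm2_le_std : forall n x i, (i < n)%nat -> Cnorm2 (x i) <= std n x.
Proof. intros. apply (Rsum_ge_term n (fun i => Cnorm2 (x i))); auto. intros; apply Cnorm2_nonneg. Qed.

Lemma hnorm2_upper : forall n h, exists C, 0 <= C /\ forall x, hnorm2 n h x <= C * std n x.
Proof.
  intros. set (Hs := Rsum n (fun i => Rsum n (fun j => Rabs (Re (h i j)) + Rabs (Im (h i j))))).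
  assert (0 <= Hs). { apply Rsum_nonneg; intros; apply Rsum_nonneg; intros. pose proof (Rabs_pos (Re (h i i0))); pose proof (Rabs_pos (Im (h i i0))); lra. }
  exists (2 * Hs). split. lra. intros x.
  unfold hnorm2. rewrite Re_Csum.
  rewrite Rmult_assoc, (Rmult_comm Hs), <- Rmult_assoc. unfold Hs. rewrite <- Rsum_scal. apply Rsum_le. intros i Hi.
  rewrite Re_Csum, <- Rsum_scal. apply Rsum_le. intros j Hj.
  eapply Rle_trans. apply Re_term_bound.
  pose proof (Cnorm2_le_std n x i Hi). pose proof (Cnorm2_le_std n x j Hj).
  pose proof (Rabs_pos (Re (h i j))); pose proof (Rabs_pos (Im (h i j))).
  nra.
Qed.

Definition mact (n : nat) (P : nat -> nat -> Cx) (x : nat -> Cx) : nat -> Cx := fun i => Csum n (fun j => Cmul (P i j) (x j)).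

Lemma Rsum_scal_r : forall n c f, Rsum n (fun i => f i * c) = Rsum n f * c.
Proof. induction n; simpl; intros. ring. rewrite IHn; ring. Qed.

Lemma std_mact : forall n P x, std n (mact n P x) <= 2 ^ n * Rsum n (fun i => Rsum n (fun j => Cnorm2 (P i j))) * std n x.
Proof.
  intros. replace (2 ^ n * Rsum n (fun i => Rsum n (fun j => Cnorm2 (P i j))) * std n x) with
    (Rsum n (fun i => 2 ^ n * (Rsum n (fun j => Cnorm2 (P i j)) * std n x))).
  2:{ rewrite Rsum_scal, Rsum_scal_r. ring. }
  unfold std at 1, mact. apply Rsum_le. intros i Hi.
  eapply Rle_trans. apply Cnorm2_Csum. apply Rmult_le_compat_l. apply pow_le; lra.
  rewrite <- Rsum_scal_r. apply Rsum_le. intros j Hj. rewrite Cnorm2_mul.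
  apply Rmult_le_compat_l. apply Cnorm2_nonneg. apply Cnorm2_le_std; auto.
Qed.

Lemma std_scale : forall n c x, std n (fun i => Cmul c (x i)) = Cnorm2 c * std n x.
Proof. intros. unfold std. rewrite <- Rsum_scal. apply Rsum_ext. intros. apply Cnorm2_mul. Qed.

Lemma std_ext : forall n x y, (forall i, (i < n)%nat -> x i = y i) -> std n x = std n y.
Proof. intros. unfold std. apply Rsum_ext. intros. rewrite H; auto. Qed.

Lemma std_zero : forall n x, std n x <= 0 -> forall i, (i < n)%nat -> x i = Cx0.
Proof. intros. apply Cnorm2_zero. pose proof (Cnorm2_le_std n x i H0). pose proof (Cnorm2_nonneg (x i)). lra. Qed.
Lemma unif_pos : forall {A} (l : list A) (Q : A -> R -> Prop),
  (forall a c c', Q a c -> 0 < c' -> c' <= c -> Q a c') ->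
  (forall a, In a l -> exists c, 0 < c /\ Q a c) -> exists c, 0 < c /\ forall a, In a l -> Q a c.
Proof.
  induction l; intros Q Hmon H. exists 1; split; [lra|intros _ []].
  destruct (H a (or_introl eq_refl)) as [c1 [Hc1 Q1]].
  destruct (IHl Q Hmon) as [c2 [Hc2 Q2]]. intros; apply H; simpl; auto.
  exists (Rmin c1 c2). split. apply Rmin_pos; auto.
  intros b [Hb|Hb]. subst b. apply (Hmon a c1); auto. apply Rmin_pos; auto. apply Rmin_l.
  apply (Hmon b c2); auto. apply Rmin_pos; auto. apply Rmin_r.
Qed.

Lemma RLsum_ge_term : forall {A} (l : list A) f a, (forall k, In k l -> 0 <= f k) -> In a l -> f a <= RLsum f l.
Proof. induction l; simpl; intros. contradiction. destruct H0. subst.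
  pose proof (RLsum_nonneg l f ltac:(auto)). lra.
  pose proof (IHl f a0 ltac:(auto) H0). pose proof (H a ltac:(auto)). lra. Qed.

Lemma Rsum_RLsum : forall {A} n (l : list A) f, Rsum n (fun i => RLsum (fun k => f i k) l) = RLsum (fun k => Rsum n (fun i => f i k)) l.
Proof. induction n; simpl; intros. induction l; simpl; auto. rewrite <- IHl; ring.
  rewrite IHn. clear IHn. induction l; simpl. ring. rewrite <- IHl. ring. Qed.

Lemma RLsum_filter : forall (W : list Z) (m g : Z -> R) (p : Z -> bool) S,
  (forall k, In k W -> 0 <= m k) -> (forall k, In k W -> g k <= S) ->
  (forall k, In k W -> p k = false -> g k = 0) ->
  RLsum (fun k => m k * g k) W <= S * RLsum m (filter p W).
Proof. induction W; simpl; intros. lra.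
  pose proof (IHW m g p S ltac:(auto) ltac:(auto) ltac:(auto)).
  destruct (p a) eqn:Pa; simpl.
  pose proof (H a ltac:(auto)). pose proof (H0 a ltac:(auto)). nra.
  rewrite (H1 a ltac:(auto) Pa). lra.
Qed.

Lemma act_expand : forall N n E x s i, in_torus N s -> (i < n)%nat ->
  act N n E s x i = Lsum (repW N n E) (fun k => Cmul (monomial N s (repR N n E k)) (mact n (repC N n E k) x i)).
Proof.
  intros. unfold act, mact.
  rewrite (Csum_ext n _ (fun j => Lsum (repW N n E) (fun k => Cmul (monomial N s (repR N n E k)) (Cmul (repC N n E k i j) (x j))))).
  rewrite Csum_Lsum. apply Lsum_ext. intros. apply Csum_mul_l.
  intros. rewrite rep_expand with (n := n) by auto. rewrite <- Lsum_mul_r. apply Lsum_ext. intros; ring.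
Qed.

Lemma proj_act : forall N n E x, is_rational_rep N n E -> forall k, In k (repW N n E) -> forall s, in_torus N s ->
  forall i, (i < n)%nat ->
  mact n (repC N n E k) (act N n E s x) i = Cmul (monomial N s (repR N n E k)) (mact n (repC N n E k) x i).
Proof.
  intros. unfold mact, act.
  rewrite (Csum_ext n _ (fun j => Csum n (fun l => Cmul (Cmul (repC N n E k i j) (rep_mat N E s j l)) (x l)))).
  rewrite Csum_swap. rewrite <- Csum_mul_l. apply Csum_ext. intros l Hl.
  rewrite Csum_mul_r. rewrite rep_proj by auto. ring.
  intros. rewrite <- Csum_mul_l. apply Csum_ext. intros; ring.
Qed.

Lemma act_tone : forall N n E x, is_rational_rep N n E -> forall i, (i < n)%nat -> act N n E tone x i = x i.
Proof. intros N n E x [_ Hid] i Hi. unfold act. rewrite (Csum_ext n _ (fun j => Cmul (if Nat.eqb i j then Cx1 else Cx0) (x j))).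
  apply Csum_delta; auto. intros. rewrite Hid; auto. Qed.

Lemma tone_torus : forall N, in_torus N tone.
Proof. unfold in_torus, tone. intros. apply Cx1_nz. Qed.

Lemma orbit_bounds : forall N n E h x, is_rational_rep N n E -> herm_form n h -> nonzero_vec n x ->
  exists (L : list (nat -> Z)) c1 C2, L <> nil /\ 0 < c1 /\ 0 <= C2 /\ forall s, in_torus N s ->
    (forall a, In a L -> c1 * Cnorm2 (monomial N s a) <= hnorm2 n h (act N n E s x)) /\
    hnorm2 n h (act N n E s x) <= C2 * RLsum (fun a => Cnorm2 (monomial N s a)) L.
Proof.
  intros N n E h x Hrep [Hh Hp] Hx.
  destruct (PD n h Hh Hp) as [c [Hc Hlow]].
  destruct (hnorm2_upper n h) as [Cu [HCu Hup]].
  set (W := repW N n E). set (R := repR N n E). set (C := repC N n E).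
  set (u := fun k => mact n (C k) x).
  set (p := fun k => if Rlt_dec 0 (std n (u k)) then true else false).
  set (Lpos := filter p W).
  set (S := RLsum (fun k => std n (u k)) W).
  assert (HS : forall k, In k W -> std n (u k) <= S).
  { intros. apply (RLsum_ge_term W (fun k => std n (u k))); auto. intros; apply std_nonneg. }
  assert (HS0 : 0 <= S) by (apply RLsum_nonneg; intros; apply std_nonneg).
  set (C2 := Cu * (2 ^ length W * S)).
  assert (Hupper : forall s, in_torus N s -> hnorm2 n h (act N n E s x) <= C2 * RLsum (fun a => Cnorm2 (monomial N s a)) (map R Lpos)).
  { intros s Hs. eapply Rle_trans. apply Hup. unfold C2. rewrite Rmult_assoc. apply Rmult_le_compat_l; auto.
    rewrite (std_ext n _ (fun i => Lsum W (fun k => Cmul (monomial N s (R k)) (u k i)))).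
    2:{ intros. apply act_expand; auto. }
    unfold std at 1. eapply Rle_trans. apply Rsum_le. intros. apply Cnorm2_Lsum.
    rewrite Rsum_scal, Rmult_assoc. apply Rmult_le_compat_l. apply pow_le; lra.
    rewrite Rsum_RLsum. rewrite (RLsum_ext W _ (fun k => Cnorm2 (monomial N s (R k)) * std n (u k))).
    2:{ intros. unfold std. rewrite <- Rsum_scal. apply Rsum_ext. intros. apply Cnorm2_mul. }
    rewrite RLsum_map. apply RLsum_filter; auto. intros; apply Cnorm2_nonneg.
    intros k _ Hpk. unfold p in Hpk. destruct (Rlt_dec 0 (std n (u k))). discriminate.
    pose proof (std_nonneg n (u k)). lra. }
  exists (map R Lpos).
  assert (Hlow' : exists c1, 0 < c1 /\ forall a, In a (map R Lpos) -> forall s, in_torus N s ->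
              c1 * Cnorm2 (monomial N s a) <= hnorm2 n h (act N n E s x)).
  { apply unif_pos.
    intros a c0 c' Hq Hc' Hle s Hs. eapply Rle_trans; [|apply (Hq s Hs)]. apply Rmult_le_compat_r; auto. apply Cnorm2_nonneg.
    intros a Ha. apply in_map_iff in Ha. destruct Ha as [k [<- Hk]].
    unfold Lpos in Hk. apply filter_In in Hk. destruct Hk as [HkW Hpk].
    unfold p in Hpk. destruct (Rlt_dec 0 (std n (u k))) as [Hsu|]; [|discriminate].
    set (Pk := 2 ^ n * Rsum n (fun i => Rsum n (fun j => Cnorm2 (C k i j))) + 1).
    assert (HPk : 0 < Pk). { unfold Pk. assert (0 <= 2 ^ n * Rsum n (fun i => Rsum n (fun j => Cnorm2 (C k i j)))).
      apply Rmult_le_pos. apply pow_le; lra. apply Rsum_nonneg; intros; apply Rsum_nonneg; intros; apply Cnorm2_nonneg. lra. }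
    exists (c * std n (u k) / Pk). split. apply Rdiv_lt_0_compat; auto. apply Rmult_lt_0_compat; auto.
    intros s Hs.
    pose proof (std_mact n (C k) (act N n E s x)) as Hm.
    rewrite (std_ext n _ (fun i => Cmul (monomial N s (R k)) (u k i))) in Hm.
    2:{ intros. apply proj_act; auto. }
    rewrite std_scale in Hm. pose proof (Hlow (act N n E s x)).
    pose proof (std_nonneg n (act N n E s x)). pose proof (Cnorm2_nonneg (monomial N s (R k))).
    assert (Cnorm2 (monomial N s (R k)) * std n (u k) <= Pk * std n (act N n E s x)) by (unfold Pk; nra).
    apply Rmult_le_reg_r with Pk; auto.
    replace (c * std n (u k) / Pk * Cnorm2 (monomial N s (R k)) * Pk) with (c * (Cnorm2 (monomial N s (R k)) * std n (u k))) by (field; lra).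
    nra. }
  destruct Hlow' as [c1 [Hc1 Hl1]].
  exists c1, C2. split; [|split; [auto|split]].
  - intro Hnil. pose proof (Hupper tone (tone_torus N)). rewrite Hnil in H. simpl in H.
    rewrite (hnorm2_ext n h _ x) in H by (apply act_tone; auto). specialize (Hp x Hx). lra.
  - unfold C2. apply Rmult_le_pos; [auto| apply Rmult_le_pos; [apply pow_le; lra|auto]].
  - intros s Hs. split; auto.
Qed.
Lemma argmax : forall {A} (l : list A) (f : A -> R), l <> nil -> exists a, In a l /\ forall b, In b l -> f b <= f a.
Proof. induction l; intros f H. congruence. destruct l as [|a' l'].
  exists a. split. simpl; auto. intros b [<-|[]]; lra.
  destruct (IHl f) as [m [Hm Hmax]]. congruence.
  destruct (Rle_dec (f a) (f m)).
  exists m. split. right; auto. intros b [<-|Hb]; auto.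
  exists a. split. left; auto. intros b [<-|Hb]. lra. specialize (Hmax b Hb); lra. Qed.

Lemma RLsum_le_len : forall {A} (l : list A) f m, (forall k, In k l -> f k <= m) -> RLsum f l <= INR (length l) * m.
Proof. induction l; intros. simpl; lra. simpl RLsum. pose proof (IHl f m ltac:(simpl in *; auto)). pose proof (H a ltac:(simpl; auto)).
  replace (INR (length (a :: l))) with (INR (length l) + 1) by (simpl length; rewrite S_INR; auto). lra. Qed.

Lemma Rsum_abs : forall n f, Rabs (Rsum n f) <= Rsum n (fun i => Rabs (f i)).
Proof. induction n; simpl; intros. rewrite Rabs_R0; lra. eapply Rle_trans. apply Rabs_triang.
  pose proof (IHn f). lra. Qed.

Lemma Rsum_sub : forall n f g, Rsum n (fun i => f i - g i) = Rsum n f - Rsum n g.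
Proof. induction n; simpl; intros. ring. rewrite IHn; ring. Qed.

Lemma lin_perturb : forall N a y y' D, (forall i, (i < N)%nat -> Rabs (y' i - D * y i) <= 1) ->
  Rabs (lin N a y' - D * lin N a y) <= Rsum N (fun i => Rabs (IZR (a i))).
Proof. intros. unfold lin. rewrite <- Rsum_scal.
  replace (Rsum N (fun i => IZR (a i) * y' i) - Rsum N (fun i => D * (IZR (a i) * y i)))
    with (Rsum N (fun i => IZR (a i) * (y' i - D * y i))).
  eapply Rle_trans. apply Rsum_abs. apply Rsum_le. intros. rewrite Rabs_mult.
  pose proof (H i H0). pose proof (Rabs_pos (IZR (a i))). nra.
  rewrite <- Rsum_sub. apply Rsum_ext. intros; ring. Qed.

Lemma lin_scale : forall N a y c, lin N a (fun i => c * y i) = c * lin N a y.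
Proof. intros. unfold lin. rewrite <- Rsum_scal. apply Rsum_ext. intros; ring. Qed.

Lemma Rabs_le_inv' : forall x a, Rabs x <= a -> - a <= x <= a.
Proof. intros. split. pose proof (Rle_abs (- x)). rewrite Rabs_Ropp in H0. lra. pose proof (Rle_abs x). lra. Qed.

Definition Badm (N : nat) (Lw Lv : list (nat -> Z)) (y : nat -> R) (e : R) : Prop :=
  forall a, In a Lw -> exists b, In b Lv /\ lin N a y + e <= lin N b y.

Lemma density : forall N Lw Lv y e, 0 < e -> Badm N Lw Lv y e ->
  exists z : nat -> Z, Badm N Lw Lv (fun i => IZR (z i)) 1.
Proof.
  intros N Lw Lv y e He HB.
  set (Lb := RLsum (fun a => Rsum N (fun i => Rabs (IZR (a i)))) (Lw ++ Lv)).
  assert (HLb : forall a, In a (Lw ++ Lv) -> Rsum N (fun i => Rabs (IZR (a i))) <= Lb).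
  { intros. apply (RLsum_ge_term (Lw ++ Lv) (fun a => Rsum N (fun i => Rabs (IZR (a i))))); auto.
    intros; apply Rsum_nonneg; intros; apply Rabs_pos. }
  assert (HLb0 : 0 <= Lb) by (apply RLsum_nonneg; intros; apply Rsum_nonneg; intros; apply Rabs_pos).
  set (D := (2 * Lb + 1) / e).
  exists (fun i => Int_part (D * y i)).
  assert (Hp : forall i, (i < N)%nat -> Rabs (IZR (Int_part (D * y i)) - D * y i) <= 1).
  { intros. destruct (base_Int_part (D * y i)). apply Rabs_le; split; lra. }
  intros a Ha. destruct (HB a Ha) as [b [Hb Hab]]. exists b. split; auto.
  pose proof (lin_perturb N a y _ D Hp). pose proof (lin_perturb N b y _ D Hp).
  pose proof (HLb a ltac:(apply in_or_app; auto)). pose proof (HLb b ltac:(apply in_or_app; auto)).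
  apply Rabs_le_inv' in H. apply Rabs_le_inv' in H0.
  assert (D * e = 2 * Lb + 1) by (unfold D; field; lra).
  assert (0 < D) by (unfold D; apply Rdiv_lt_0_compat; lra).
  assert (D * lin N a y + D * e <= D * lin N b y) by nra.
  lra.
Qed.

Lemma bad_margin : forall N Lw Lv y, (forall a, In a Lw -> exists b, In b Lv /\ lin N a y < lin N b y) ->
  exists e, 0 < e /\ Badm N Lw Lv y e.
Proof. intros. apply (unif_pos Lw (fun a e => exists b, In b Lv /\ lin N a y + e <= lin N b y)).
  intros a c c' [b [Hb Hl]] Hc' Hle. exists b; split; auto; lra.
  intros a Ha. destruct (H a Ha) as [b [Hb Hl]]. exists (lin N b y - lin N a y). split. lra. exists b; split; auto; lra.
Qed.
Definition OB (N n : nat) (E : nat -> nat -> laurentN) (h : nat -> nat -> Cx) (x : nat -> Cx)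
  (L : list (nat -> Z)) (c1 C2 : R) : Prop :=
  L <> nil /\ 0 < c1 /\ 0 <= C2 /\ forall s, in_torus N s ->
    (forall a, In a L -> c1 * Cnorm2 (monomial N s a) <= hnorm2 n h (act N n E s x)) /\
    hnorm2 n h (act N n E s x) <= C2 * RLsum (fun a => Cnorm2 (monomial N s a)) L.

Lemma ln_le' : forall x y, 0 < x -> x <= y -> ln x <= ln y.
Proof. intros. destruct (Rle_lt_or_eq_dec _ _ H0). left; apply ln_increasing; auto. subst; lra. Qed.

Lemma len_pos : forall {A} (l : list A), l <> nil -> 0 < INR (length l).
Proof. intros. destruct l. congruence. simpl length. rewrite S_INR. pose proof (pos_INR (length l)). lra. Qed.

Lemma OB_low : forall N n E h x L c1 C2 s a, OB N n E h x L c1 C2 -> in_torus N s -> In a L ->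
  ln c1 + lin N a (logv s) <= ln (hnorm2 n h (act N n E s x)).
Proof. intros N n E h x L c1 C2 s a [_ [Hc1 [_ H]]] Hs Ha. destruct (H s Hs) as [Hl _].
  specialize (Hl a Ha). rewrite Cnorm2_monomial in Hl by auto.
  rewrite <- (ln_exp (lin N a (logv s))), <- ln_mult by (auto; apply exp_pos).
  apply ln_le'. apply Rmult_lt_0_compat; auto; apply exp_pos. auto. Qed.

Lemma OB_pos : forall N n E h x L c1 C2 s, OB N n E h x L c1 C2 -> in_torus N s -> 0 < hnorm2 n h (act N n E s x).
Proof. intros N n E h x L c1 C2 s HO Hs. destruct HO as [Hne [Hc1 [HC2 H]]]. destruct L as [|a L]. congruence.
  destruct (H s Hs) as [Hl _]. specialize (Hl a (or_introl eq_refl)).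
  pose proof (Cnorm2_pos _ (monomial_nz N s a Hs)). nra. Qed.

Lemma OB_up : forall N n E h x L c1 C2 s a, OB N n E h x L c1 C2 -> in_torus N s -> In a L ->
  (forall b, In b L -> lin N b (logv s) <= lin N a (logv s)) ->
  ln (hnorm2 n h (act N n E s x)) <= ln ((C2 + 1) * INR (length L)) + lin N a (logv s).
Proof. intros N n E h x L c1 C2 s a HO Hs Ha Hmax. pose proof (OB_pos _ _ _ _ _ _ _ _ s HO Hs).
  destruct HO as [Hne [Hc1 [HC2 HH]]]. destruct (HH s Hs) as [_ Hu].
  pose proof (len_pos L Hne).
  rewrite <- (ln_exp (lin N a (logv s))), <- ln_mult. 2: nra. 2: apply exp_pos.
  apply ln_le'; auto.
  assert (RLsum (fun a => Cnorm2 (monomial N s a)) L <= INR (length L) * exp (lin N a (logv s))).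
  { apply RLsum_le_len. intros k Hk. rewrite Cnorm2_monomial by auto.
    destruct (Rle_lt_or_eq_dec _ _ (Hmax k Hk)). left; apply exp_increasing; auto. rewrite e; lra. }
  assert (0 <= RLsum (fun a => Cnorm2 (monomial N s a)) L) by (apply RLsum_nonneg; intros; apply Cnorm2_nonneg).
  pose proof (exp_pos (lin N a (logv s))). nra. Qed.

Lemma ln_div' : forall x y, 0 < x -> 0 < y -> ln (x / y) = ln x - ln y.
Proof. intros. unfold Rdiv. rewrite ln_mult. rewrite ln_Rinv by auto. ring. auto. apply Rinv_0_lt_compat; auto. Qed.
Lemma eval1_single : forall k t, eval1 ((Cx1, k) :: nil) t = CpowZ t k.
Proof. intros. unfold eval1; simpl. ring. Qed.

Lemma Cnorm2_lt_of_Cabs : forall t d, Cabs t < d -> Cnorm2 t < d * d.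
Proof. intros. unfold Cabs in H. pose proof (Cnorm2_nonneg t). pose proof (sqrt_pos (Cnorm2 t)).
  rewrite <- (sqrt_sqrt (Cnorm2 t)) by auto. nra. Qed.

Theorem mainTheorem16 (N nV nW : nat) (EV EW : nat -> nat -> laurentN)
  (hV hW : nat -> nat -> Cx) (v w : nat -> Cx) :
  is_rational_rep N nV EV -> is_rational_rep N nW EW ->
  herm_form nV hV -> herm_form nW hW ->
  nonzero_vec nV v -> nonzero_vec nW w ->
  ((exists sq : nat -> nat -> Cx,
      (forall j, in_torus N (sq j)) /\
      (forall M : R, exists K : nat, forall j, (K <= j)%nat ->
         pwv N nV nW EV EW hV hW v w (sq j) < M))
   <->
   (exists L : nat -> laurent1,
      is_alg_1ps N L /\
      (forall M : R, exists delta : R, 0 < delta /\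
         forall t : Cx, 0 < Cabs t < delta ->
           pwv N nV nW EV EW hV hW v w (ops_point L t) < M))).
Proof.
  intros HrV HrW HhV HhW Hv Hw.
  destruct (orbit_bounds N nW EW hW w HrW HhW Hw) as [Lw [c1w [C2w HOw]]].
  destruct (orbit_bounds N nV EV hV v HrV HhV Hv) as [Lv [c1v [C2v HOv]]].
  assert (OBw : OB N nW EW hW w Lw c1w C2w) by exact HOw.
  assert (OBv : OB N nV EV hV v Lv c1v C2v) by exact HOv.
  clear HOw HOv.
  assert (Hnw : 0 < hnorm2 nW hW w) by (apply HhW; auto).
  assert (Hnv : 0 < hnorm2 nV hV v) by (apply HhV; auto).
  assert (Hpwv : forall s, in_torus N s -> pwv N nV nW EV EW hV hW v w s =
     ln (hnorm2 nW hW (act N nW EW s w)) - ln (hnorm2 nW hW w)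
     - (ln (hnorm2 nV hV (act N nV EV s v)) - ln (hnorm2 nV hV v))).
  { intros. unfold pwv. rewrite !ln_div'; auto. eapply OB_pos; eauto. eapply OB_pos; eauto. }
  assert (Lwne : Lw <> nil) by apply OBw. assert (Lvne : Lv <> nil) by apply OBv.
  assert (c1wp : 0 < c1w) by apply OBw. assert (c1vp : 0 < c1v) by apply OBv.
  split.
  - intros [sq [Hsq Hlim]].
    destruct (classic (exists z, Badm N Lw Lv (fun i => IZR (z i)) 1)) as [[z Hz]|Hno].
    + exists (fun i => (Cx1, (- z i)%Z) :: nil). split.
      * split.
        -- intros t Ht i Hi. rewrite eval1_single. apply CpowZ_nz; auto.
        -- intros s t Hs Ht i Hi. rewrite !eval1_single. apply CpowZ_mul; auto.
      * intros M.
        set (K1 := ln ((C2w + 1) * INR (length Lw)) - ln (hnorm2 nW hW w) - ln c1v + ln (hnorm2 nV hV v)).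
        exists (Rmin 1 (exp ((M - K1) / 2))). split. apply Rmin_pos; [lra|apply exp_pos].
        intros t [Ht0 Htd].
        assert (Htnz : t <> Cx0). { intro E. subst. unfold Cabs, Cnorm2 in Ht0; simpl in Ht0.
          replace (0*0+0*0) with 0 in Ht0 by ring. rewrite sqrt_0 in Ht0. lra. }
        set (s := ops_point (fun i => (Cx1, (- z i)%Z) :: nil) t).
        assert (Hs : in_torus N s). { intros i Hi. unfold s, ops_point. rewrite eval1_single. apply CpowZ_nz; auto. }
        set (u := ln (Cnorm2 t)).
        assert (Hy : forall a, lin N a (logv s) = (- u) * lin N a (fun i => IZR (z i))).
        { intros. rewrite <- lin_scale. unfold lin. apply Rsum_ext. intros. unfold logv, s, ops_point.
          rewrite eval1_single, ln_Cnorm2_CpowZ by auto. rewrite opp_IZR. fold u. ring. }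
        assert (Hu : u < 0 /\ u < M - K1).
        { pose proof (Cnorm2_pos t Htnz). pose proof (Cnorm2_lt_of_Cabs _ _ Htd).
          pose proof (Rmin_l 1 (exp ((M - K1) / 2))). pose proof (Rmin_r 1 (exp ((M - K1) / 2))).
          set (d := Rmin 1 (exp ((M - K1) / 2))) in *.
          assert (0 < d) by (unfold d; apply Rmin_pos; [lra|apply exp_pos]).
          assert (u < ln (d * d)) by (apply ln_increasing; auto).
          rewrite ln_mult in H4 by auto.
          assert (ln d <= 0) by (rewrite <- ln_1; apply ln_le'; auto).
          assert (ln d <= (M - K1) / 2) by (rewrite <- (ln_exp ((M - K1) / 2)); apply ln_le'; auto).
          split; lra. }
        destruct (argmax Lw (fun a => lin N a (logv s)) Lwne) as [a [Ha Hmax]].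
        destruct (Hz a Ha) as [b [Hb Hab]].
        pose proof (OB_up _ _ _ _ _ _ _ _ s a OBw Hs Ha Hmax).
        pose proof (OB_low _ _ _ _ _ _ _ _ s b OBv Hs Hb).
        rewrite Hpwv by auto.
        assert (lin N a (logv s) + (- u) <= lin N b (logv s)).
        { rewrite !Hy. assert (0 <= - u) by lra. nra. }
        unfold K1 in Hu. lra.
    + exfalso.
      assert (Hgood : forall y, exists a, In a Lw /\ forall b, In b Lv -> lin N b y <= lin N a y).
      { intros y. destruct (classic (exists a, In a Lw /\ forall b, In b Lv -> lin N b y <= lin N a y)) as [|Hn]; auto.
        exfalso. apply Hno.
        assert (forall a, In a Lw -> exists b, In b Lv /\ lin N a y < lin N b y).
        { intros a Ha. destruct (classic (exists b, In b Lv /\ lin N a y < lin N b y)) as [|Hn2]; auto.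
          exfalso. apply Hn. exists a. split; auto. intros b Hb.
          destruct (Rle_dec (lin N b y) (lin N a y)); auto. exfalso; apply Hn2. exists b; split; auto; lra. }
        destruct (bad_margin N Lw Lv y H) as [e [He HB]].
        apply (density N Lw Lv y e He HB). }
      set (K0 := ln c1w - ln (hnorm2 nW hW w) - ln ((C2v + 1) * INR (length Lv)) + ln (hnorm2 nV hV v)).
      destruct (Hlim K0) as [K HK]. specialize (HK K (le_n K)).
      set (s := sq K) in *. assert (Hs : in_torus N s) by apply Hsq.
      destruct (Hgood (logv s)) as [a [Ha Hab]].
      destruct (argmax Lv (fun a => lin N a (logv s)) Lvne) as [a' [Ha' Hmax]].
      pose proof (OB_low _ _ _ _ _ _ _ _ s a OBw Hs Ha).
      pose proof (OB_up _ _ _ _ _ _ _ _ s a' OBv Hs Ha' Hmax).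
      pose proof (Hab a' Ha').
      rewrite Hpwv in HK by auto. unfold K0 in HK. lra.
  - intros [L [[Hnz Hmul] Hlim]].
    set (sq := fun j : nat => ops_point L (Creal (/ (INR j + 1)))).
    assert (Hpos : forall j, 0 < / (INR j + 1)) by (intros; apply Rinv_0_lt_compat; pose proof (pos_INR j); lra).
    assert (Hcnz : forall j, Creal (/ (INR j + 1)) <> Cx0).
    { intros j E. apply (f_equal Re) in E. simpl in E. specialize (Hpos j). lra. }
    exists sq. split.
    + intros j i Hi. unfold sq, ops_point. apply Hnz; auto.
    + intros M. destruct (Hlim M) as [d [Hd Ht]].
      destruct (INR_unbounded (/ d)) as [K HK].
      exists K. intros j Hj. apply Ht. unfold Cabs, Cnorm2, Creal; simpl.
      replace (/ (INR j + 1) * / (INR j + 1) + 0 * 0) with (/ (INR j + 1) * / (INR j + 1)) by ring.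
      rewrite sqrt_square by (left; auto). split; auto.
      apply le_INR in Hj. pose proof (pos_INR K).
      apply Rle_lt_trans with (/ (INR K + 1)).
      apply Rinv_le_contravar; lra.
      replace d with (/ / d) by (field; lra). apply Rinv_lt_contravar.
      pose proof (Rinv_0_lt_compat d Hd). nra. lra.
Qed.
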